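(* For every integer $r\ge2$ there is a constant $C(r)$ such that every $d$-regular graph $G$ on $n$ vertices with girth at least $2\log\log d+3$ satisfies $m(G,r)\le C(r)\,n\,d^{-\frac{r}{r-1}}$.
   Context: Bootstrap percolation with threshold $r\ge 2$ on a graph $G=(V,E)$: given a set $A_0\subseteq V$ of seeds, define for $i\ge1$ $A_i=A_{i-1}\cup\{v:|N(v)\cap A_{i-1}|\ge r\}$, where $N(v)$ is the set of neighbors of $v$, and $\langle A_0\rangle=\bigcup_i A_i$. The set $A_0$ is contagious if $\langle A_0\rangle=V$; $m(G,r)$ denotes the minimum cardinality of a contagious set. The girth is the length of a shortest cycle. Logarithms are base 2. *)

(* Defs.v *)
From mathcomp Require Import all_boot.
From Stdlib Require Import Reals.
Set Implicit Arguments. Unset Strict Implicit. Unset Printing Implicit Defensive.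

Definition simple_graph (T : finType) (e : rel T) : Prop :=
  symmetric e /\ irreflexive e.

Definition nbhd (T : finType) (e : rel T) (v : T) : {set T} := [set u | e v u].

Definition regular (T : finType) (e : rel T) (d : nat) : Prop :=
  forall v : T, #|nbhd e v| = d.

Definition is_cycle (T : finType) (e : rel T) (s : seq T) : bool :=
  [&& uniq s, 3 <= size s & cycle e s].

(* "girth >= g": every cycle has length >= g (vacuous for acyclic graphs,
   whose girth is +infinity). *)
Definition girth_at_least (T : finType) (e : rel T) (g : R) : Prop :=
  forall s : seq T, is_cycle e s -> (g <= INR (size s))%R.

Definition bp_step (T : finType) (e : rel T) (r : nat) (A : {set T}) : {set T} :=
  A :|: [set v | r <= #|nbhd e v :&: A|].

Definition bp_iter (T : finType) (e : rel T) (r : nat) (A0 : {set T}) (i : nat)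
  : {set T} := iter i (bp_step e r) A0.

Definition contagious (T : finType) (e : rel T) (r : nat) (A0 : {set T}) : Prop :=
  forall v : T, exists i : nat, v \in bp_iter e r A0 i.

Definition is_min_contagious_size (T : finType) (e : rel T) (r : nat) (m : nat)
  : Prop :=
  (exists A0 : {set T}, contagious e r A0 /\ #|A0| = m) /\
  (forall A0 : {set T}, contagious e r A0 -> m <= #|A0|).

Definition log2 (x : R) : R := (ln x / ln 2)%R.

(* Main.v *)
Require Import Defs.
From mathcomp Require Import all_boot.
From Stdlib Require Import Reals.
From Stdlib Require Import Lra.
From mathcomp Require Import zify.
Set Implicit Arguments. Unset Strict Implicit. Unset Printing Implicit Defensive.

Section Prob.
Variable T : finType.
Variable p : R.
Hypothesis hp0 : (0 <= p)%R.
Hypothesis hp1 : (p <= 1)%R.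

Definition upd (f : T -> bool) (x : T) (b : bool) : T -> bool :=
  fun y => if y == x then b else f y.

Fixpoint Ex (l : seq T) (F : (T -> bool) -> R) : R :=
  match l with
  | [::] => F (fun _ => false)
  | x :: l' => (p * Ex l' (fun f => F (upd f x true)) +
                (1 - p) * Ex l' (fun f => F (upd f x false)))%R
  end.

Lemma Ex_ext l F G : (forall f, F f = G f) -> Ex l F = Ex l G.
Proof.
elim: l F G => [|x l IH] F G H /=; first by rewrite H.
by congr (_ * _ + _ * _)%R; apply: IH => f; rewrite H.
Qed.

Lemma Ex_le l F G : (forall f, F f <= G f)%R -> (Ex l F <= Ex l G)%R.
Proof.
elim: l F G => [|x l IH] F G H /=; first by [].
have h1 := IH (fun f => F (upd f x true)) (fun f => G (upd f x true)) (fun f => H _).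
have h2 := IH (fun f => F (upd f x false)) (fun f => G (upd f x false)) (fun f => H _).
nra.
Qed.

Lemma Ex_const l c : Ex l (fun _ => c) = c.
Proof. elim: l => [|x l IH] //=; rewrite IH; ring. Qed.

Lemma Ex_add l F G : Ex l (fun f => F f + G f)%R = (Ex l F + Ex l G)%R.
Proof.
elim: l F G => [|x l IH] F G //=.
rewrite (IH (fun f => F (upd f x true))) (IH (fun f => F (upd f x false))); ring.
Qed.

Lemma Ex_scale l c F : Ex l (fun f => c * F f)%R = (c * Ex l F)%R.
Proof.
elim: l F => [|x l IH] F //=.
rewrite (IH (fun f => F (upd f x true))) (IH (fun f => F (upd f x false))); ring.
Qed.

Lemma Ex_exists l F : exists f, (F f <= Ex l F)%R.
Proof.
elim: l F => [|x l IH] F /=; first by exists (fun _ => false); lra.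
have [f1 h1] := IH (fun f => F (upd f x true)).
have [f2 h2] := IH (fun f => F (upd f x false)).
case: (Rle_dec (Ex l (fun f => F (upd f x true))) (Ex l (fun f => F (upd f x false)))) => h.
- exists (upd f1 x true); nra.
- exists (upd f2 x false); nra.
Qed.

Definition indR (b : bool) : R := if b then 1%R else 0%R.

Lemma Ex_coord l x : Ex l (fun f => indR (f x)) = if x \in l then p else 0%R.
Proof.
elim: l => [|y l IH] //=.
rewrite in_cons; case: (eqVneq x y) => [->|ne] /=.
- rewrite /upd eqxx !Ex_const /indR; lra.
- rewrite /upd (negbTE ne) IH; case: (x \in l); lra.
Qed.

Definition dep (F : (T -> bool) -> R) (A : pred T) :=
  forall f g, (forall y, A y -> f y = g y) -> F f = F g.

Lemma dep_upd F A x b : dep F A -> dep (fun f => F (upd f x b)) A.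
Proof.
move=> H f g Hfg; apply: H => y Ay; rewrite /upd; case: (y == x) => //; exact: Hfg.
Qed.

Lemma dep_out F A x b f : dep F A -> A x = false -> F (upd f x b) = F f.
Proof.
move=> H Ax; apply: H => y Ay; rewrite /upd; case: eqP => // ey.
by rewrite ey Ax in Ay.
Qed.

Lemma Ex_indep l F G A B :
  dep F A -> dep G B -> (forall y, A y -> B y -> False) ->
  Ex l (fun f => F f * G f)%R = (Ex l F * Ex l G)%R.
Proof.
elim: l F G => [|x l IH] F G HF HG HAB //=.
case Ax: (A x).
- have Bx : B x = false by apply/negP => Bx; exact: HAB Ax Bx.
  rewrite (@Ex_ext l (fun f => F (upd f x true) * G (upd f x true))%R
                    (fun f => F (upd f x true) * G f)%R); last by move=> f; rewrite (dep_out _ _ HG).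
  rewrite (@Ex_ext l (fun f => F (upd f x false) * G (upd f x false))%R
                    (fun f => F (upd f x false) * G f)%R); last by move=> f; rewrite (dep_out _ _ HG).
  rewrite (IH _ _ (dep_upd x true HF) HG HAB) (IH _ _ (dep_upd x false HF) HG HAB).
  rewrite (@Ex_ext l (fun f => G (upd f x true)) G); last by move=> f; rewrite (dep_out _ _ HG).
  rewrite (@Ex_ext l (fun f => G (upd f x false)) G); last by move=> f; rewrite (dep_out _ _ HG).
  ring.
- rewrite (@Ex_ext l (fun f => F (upd f x true) * G (upd f x true))%R
                    (fun f => F f * G (upd f x true))%R); last by move=> f; rewrite (dep_out _ _ HF).
  rewrite (@Ex_ext l (fun f => F (upd f x false) * G (upd f x false))%R
                    (fun f => F f * G (upd f x false))%R); last by move=> f; rewrite (dep_out _ _ HF).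
  rewrite (IH _ _ HF (dep_upd x true HG) HAB) (IH _ _ HF (dep_upd x false HG) HAB).
  rewrite (@Ex_ext l (fun f => F (upd f x true)) F); last by move=> f; rewrite (dep_out _ _ HF).
  rewrite (@Ex_ext l (fun f => F (upd f x false)) F); last by move=> f; rewrite (dep_out _ _ HF).
  ring.
Qed.

End Prob.

Section Walks.
Variable T : finType.
Variable e : rel T.
Hypothesis esym : symmetric e.
Hypothesis eirr : irreflexive e.

Fixpoint nb (s : seq T) : bool :=
  match s with
  | a :: ((b :: c :: _) as t) => (a != c) && nb t
  | _ => true
  end.

Lemma nb_behead h t : nb (h :: t) -> nb t.
Proof. by case: t => [|a [|b t]] //= /andP[]. Qed.

Lemma nb_catl s t : nb (s ++ t) -> nb s.
Proof.
elim: s => [|h s IH] //=.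
case: s IH => [|a [|b s]] //= IH /andP[-> H] /=; exact: IH.
Qed.

Lemma nb_catX u b c t :
  nb (u ++ [:: b, c & t]) = nb (u ++ [:: b; c]) && nb [:: b, c & t].
Proof.
elim: u => [|h u IH] //=.
case: u IH => [|h2 [|h3 u]] /= IH.
- by rewrite andbT.
- by rewrite IH andbT andbA.
- by rewrite IH andbA.
Qed.

Lemma nb_cycle n x s : size s <= n -> path e x s -> nb (x :: s) -> ~~ uniq (x :: s) ->
  exists c, is_cycle e c && (size c <= size s).
Proof.
elim: n x s => [|n IH] x s Hs Hp Hnb Hu.
  by move: Hs; rewrite leqn0 => /nilP Hs; rewrite Hs in Hu.
case Hx: (x \in s).
- pose i := index x s.
  have Hsplit : s = take i s ++ x :: drop i.+1 s.
    by rewrite -{1}(cat_take_drop i s) (drop_nth x) ?index_mem // nth_index.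
  set p1 := take i s in Hsplit.
  have Hp1 : x \notin p1 by rewrite /p1 /i in_take // ltnn.
  have Hsz : size p1 < size s.
    have Hi : index x s < size s by rewrite index_mem.
    by rewrite /p1 size_take /i Hi.
  rewrite Hsplit cat_path /= in Hp; case/and3P: Hp => Hp1p He Hp2.
  case Hu1: (uniq (x :: p1)).
  + exists (x :: p1); rewrite /is_cycle Hu1 /= rcons_path Hp1p He /= Hsz !andbT.
    clearbody p1.
    case: p1 Hsplit Hp1 Hsz Hp1p He Hu1 => [|a [|b p1]] Hsplit _ _ _ He _ //.
    * by rewrite /= eirr in He.
    * by move: Hnb; rewrite Hsplit /= eqxx.
  + have Hs1 : size p1 <= n by rewrite -ltnS (leq_trans Hsz Hs).
    have Hnb1 : nb (x :: p1).
      by move: Hnb; rewrite Hsplit -cat_cons => /nb_catl.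
    have [c /andP[Hc1 Hc2]] := IH x p1 Hs1 Hp1p Hnb1 (negbT Hu1).
    by exists c; rewrite Hc1 (leq_trans Hc2 (ltnW Hsz)).
- move: Hu; rewrite /= Hx /=.
  case: s Hs Hp Hnb Hx => [|y s] // Hs Hp Hnb _ Hu.
  move: Hp => /= /andP[_ Hp]; move: Hs => /= Hs.
  have [c /andP[Hc1 Hc2]] := IH y s Hs Hp (nb_behead Hnb) Hu.
  by exists c; rewrite Hc1 (leq_trans Hc2).
Qed.




Fixpoint inD (k : nat) (par x z : T) : bool :=
  if k is k'.+1 then (z == x) || [exists y, e x y && (y != par) && inD k' x y z]
  else z == x.

Lemma inD_fwd k par x z : inD k par x z ->
  exists w, [&& path e x w, last x w == z, size w <= k & nb [:: par, x & w]].
Proof.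
elim: k par x => [|k IH] par x /=.
  by move/eqP->; exists [::]; rewrite /= eqxx.
case/orP => [/eqP->|/existsP[y /andP[/andP[Hxy Hyp] Hin]]].
  by exists [::]; rewrite /= eqxx.
have [w /and4P[H1 H2 H3 H4]] := IH _ _ Hin.
exists (y :: w); simpl in H4; by rewrite /= Hxy H1 H2 ltnS H3 eq_sym Hyp H4.
Qed.

Lemma inD_bwd k par x z : inD k par x z ->
  exists s, [&& path e z s, last z s == x, size s <= k & nb (rcons (z :: s) par)].
Proof.
elim: k par x => [|k IH] par x /=.
  by move/eqP->; exists [::]; rewrite /= eqxx.
case/orP => [/eqP->|/existsP[y /andP[/andP[Hxy Hyp] Hin]]].
  by exists [::]; rewrite /= eqxx.
have [s /and4P[H1 /eqP H2 H3 H4]] := IH _ _ Hin.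
have Hnb : nb (rcons (rcons (z :: s) x) par).
  have -> : rcons (rcons (z :: s) x) par = belast z s ++ [:: y, x & [:: par]].
    by rewrite -H2 -cats1 -cats1 (lastI z s) -cats1 -!catA.
  rewrite nb_catX /= andbT Hyp andbT.
  by move: H4; rewrite -cats1 (lastI z s) H2 -cats1 -catA.
exists (rcons s x); apply/and4P; split => //.
- by rewrite rcons_path H1 H2 esym Hxy.
- by rewrite last_rcons.
- by rewrite size_rcons ltnS.
Qed.

Lemma inD_disj k x y1 y2 z : e x y1 -> e x y2 -> y1 != y2 ->
  inD k x y1 z -> inD k x y2 z -> exists c, is_cycle e c && (size c <= (k + k).+2).
Proof.
move=> H1 H2 Hne Hi1 Hi2.
have [s1 /and4P[P1 /eqP L1 S1 N1]] := inD_bwd Hi1.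
have [w2 /and4P[P2 /eqP L2 S2 N2]] := inD_fwd Hi2.
pose s := rcons s1 x ++ y2 :: w2.
have Hp : path e z s by rewrite cat_path rcons_path P1 L1 esym H1 last_rcons /= H2 P2.
have Hnb : nb (z :: s).
  have -> : z :: s = belast z s1 ++ [:: y1, x, y2 & w2].
    by rewrite -L1 /s -cat_cons -rcons_cons (lastI z s1) -!cats1 -!catA.
  rewrite nb_catX /= Hne.
  move: N1 N2; rewrite -cats1 (lastI z s1) L1 -cats1 -catA /= => -> ->.
  by [].
have Hu : ~~ uniq (z :: s).
  rewrite /= negb_and negbK; apply/orP; left.
  by rewrite /s mem_cat; apply/orP; right; rewrite -L2 mem_last.
have [c /andP[Hc1 Hc2]] := nb_cycle (leqnn _) Hp Hnb Hu.
exists c; rewrite Hc1 (leq_trans Hc2) // /s size_cat size_rcons /=.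
by rewrite addSn addnS !ltnS leq_add.
Qed.

End Walks.

Section Tree.
Variable T : finType.
Variable e : rel T.
Hypothesis esym : symmetric e.
Hypothesis eirr : irreflexive e.
Variable r : nat.

Definition ch par x : seq T := enum (nbhd e x :\ par).

Lemma mem_ch par x y : (y \in ch par x) = (y != par) && e x y.
Proof. by rewrite mem_enum in_setD1 /nbhd in_set. Qed.

Fixpoint inf (f : T -> bool) k par x : bool :=
  if k is k'.+1 then f x || (r <= count (fun y => inf f k' x y) (ch par x))
  else f x.

Lemma inf_dep k par x f g : (forall z, inD e k par x z -> f z = g z) ->
  inf f k par x = inf g k par x.
Proof.
elim: k par x => [|k IH] par x H /=; first by apply: H; rewrite /= eqxx.
rewrite H /=; last by rewrite eqxx.
congr (_ || (r <= _)); apply: eq_in_count => y; rewrite mem_ch => /andP[Hyp Hxy].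
apply: IH => z Hz; apply: H; rewrite /=; apply/orP; right; apply/existsP; exists y.
by rewrite Hxy Hyp.
Qed.

Lemma bp_iter_sub (A : {set T}) i : A \subset bp_iter e r A i.
Proof.
elim: i => [|i IH] //=; apply: subset_trans IH _; exact: subsetUl.
Qed.

Lemma bp_iter_mono (A B : {set T}) i : A \subset B -> bp_iter e r A i \subset bp_iter e r B i.
Proof.
move=> HAB; elim: i => [|i IH] //=.
rewrite /bp_step; apply/subsetP => v; rewrite !in_setU !in_set => /orP[H|H].
  by rewrite (subsetP IH _ H).
apply/orP; right; apply: leq_trans H _; apply: subset_leq_card; exact: setIS.
Qed.

Lemma inf_sound f k par x : inf f k par x -> x \in bp_iter e r [set y | f y] k.
Proof.
elim: k par x => [|k IH] par x /=; first by rewrite in_set.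
case/orP => [Hf|Hc].
  by apply: (subsetP (bp_iter_sub _ k.+1)); rewrite in_set.
rewrite /bp_step in_setU in_set; apply/orP; right.
apply: (leq_trans Hc).
rewrite -size_filter cardE.
apply: uniq_leq_size; first by apply: filter_uniq; exact: enum_uniq.
move=> y; rewrite mem_filter mem_ch mem_enum in_setI /nbhd in_set.
by case/andP=> /IH -> /andP[_ ->].
Qed.

End Tree.

Fixpoint b (m : nat) (q : R) (t : nat) : R :=
  match m with
  | 0 => if t is 0 then 1%R else 0%R
  | m'.+1 => if t is t'.+1 then (q * b m' q t' + (1 - q) * b m' q t'.+1)%R else 1%R
  end.

Lemma pow_le1 x n : (0 <= x)%R -> (x <= 1)%R -> (x ^ n <= 1)%R.
Proof.
move=> h0 h1; elim: n => [|n IH] /=; first lra.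
have : (0 <= x ^ n)%R by apply: pow_le.
nra.
Qed.

Section B.
Variable q : R.
Hypothesis hq0 : (0 <= q)%R.
Hypothesis hq1 : (q <= 1)%R.

Lemma b0 m : b m q 0 = 1%R.
Proof. by case: m. Qed.

Lemma b_range m t : (0 <= b m q t <= 1)%R.
Proof.
elim: m t => [|m IH] [|t] /=; try lra.
have := IH t; have := IH t.+1; nra.
Qed.

Lemma b_decr m t : (b m q t.+1 <= b m q t)%R.
Proof.
elim: m t => [|m IH] [|t] /=; try lra.
- have := b_range m 1; rewrite b0; nra.
- have := IH t; have := IH t.+1; nra.
Qed.

Lemma b_incr m t : (b m q t <= b m.+1 q t)%R.
Proof.
case: t => [|t] /=; first by rewrite b0; lra.
have := b_decr m t; nra.
Qed.

Lemma b_mono_m m m' t : m <= m' -> (b m q t <= b m' q t)%R.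
Proof.
move=> H; rewrite -(subnKC H); elim: (m' - m) => [|k IH]; first by rewrite addn0; lra.
rewrite addnS; apply: Rle_trans IH (b_incr _ _).
Qed.

Lemma b_lower m t : (INR 'C(m, t) * q ^ t * (1 - q) ^ m <= b m q t)%R.
Proof.
elim: m t => [|m IH] [|t] /=.
- lra.
- rewrite /=; lra.
- simpl.
  have : (0 <= (1 - q) ^ m <= 1)%R.
    split; [apply: pow_le; lra | apply: pow_le1; lra].
  nra.
- rewrite binS plus_INR.
  have H1 := IH t; have H2 := IH t.+1.
  have hA : (0 <= q ^ t * (1 - q) ^ m)%R by apply: Rmult_le_pos; apply: pow_le; lra.
  have hC1 : (0 <= INR 'C(m, t))%R by apply: pos_INR.
  have hC2 : (0 <= INR 'C(m, t.+1))%R by apply: pos_INR.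
  simpl in H2.
  have : (INR 'C(m, t) * (q * q ^ t) * ((1 - q) * (1 - q) ^ m) <= q * (INR 'C(m, t) * q ^ t * (1 - q) ^ m))%R.
    have : (0 <= INR 'C(m, t) * q * (q ^ t * (1 - q) ^ m))%R by apply: Rmult_le_pos => //; nra.
    nra.
  nra.
Qed.

Lemma b_upper m t : ((1 - b m q t) * (1 - q) ^ t <= INR m.+1 ^ t * (1 - q) ^ m)%R.
Proof.
elim: m t => [|m IH] [|t]; [simpl..|].
- lra.
- have : (0 <= (1 - q) ^ t <= 1)%R by split; [apply: pow_le; lra | apply: pow_le1; lra].
  rewrite pow1; nra.
- have : (0 <= (1 - q) ^ m)%R by apply: pow_le; lra.
  nra.
- change (b m.+1 q t.+1) with (q * b m q t + (1-q)* b m q t.+1)%R.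
  change ((1-q)^t.+1)%R with ((1-q)*(1-q)^t)%R.
  change (INR m.+2 ^ t.+1)%R with (INR m.+2 * INR m.+2 ^ t)%R.
  change ((1-q)^m.+1)%R with ((1-q)*(1-q)^m)%R.
  have H1 := IH t; have H2 := IH t.+1.
  change ((1-q)^t.+1)%R with ((1-q)*(1-q)^t)%R in H2.
  change (INR m.+1 ^ t.+1)%R with (INR m.+1 * INR m.+1 ^ t)%R in H2.
  set M := INR m.+1 in H1 H2 *.
  have hM : INR m.+2 = (M + 1)%R by rewrite /M -S_INR.
  rewrite hM.
  have hMp : (1 <= M)%R by rewrite /M; change 1%R with (INR 1); apply: le_INR; apply/leP.
  have hpow : (M ^ t <= (M + 1) ^ t)%R by apply: pow_incr; lra.
  have hMt : (0 <= M ^ t)%R by apply: pow_le; lra.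
  have hq : (0 <= (1 - q) ^ m)%R by apply: pow_le; lra.
  have hqt : (0 <= (1 - q) ^ t)%R by apply: pow_le; lra.
  have E : ((1 - (q * b m q t + (1 - q) * b m q t.+1)) * ((1 - q) * (1 - q) ^ t)
     = q * (1 - q) * ((1 - b m q t) * (1 - q) ^ t) + (1 - q) * ((1 - b m q t.+1) * ((1 - q) * (1 - q) ^ t)))%R by ring.
  rewrite E.
  have h1 : (q * (1 - q) * ((1 - b m q t) * (1 - q) ^ t) <= q * (1 - q) * (M ^ t * (1 - q) ^ m))%R.
    apply: Rmult_le_compat_l; nra.
  have h2 : ((1 - q) * ((1 - b m q t.+1) * ((1 - q) * (1 - q) ^ t)) <= (1 - q) * (M * M ^ t * (1 - q) ^ m))%R.
    apply: Rmult_le_compat_l; lra.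
  have h3 : ((1 - q) * (1 - q) ^ m * (q * M ^ t + M * M ^ t) <= (M + 1) * (M + 1) ^ t * ((1 - q) * (1 - q) ^ m))%R.
    have h4 : (q * M ^ t + M * M ^ t <= (M + 1) * (M + 1) ^ t)%R by nra.
    have h5 : (0 <= (1 - q) * (1 - q) ^ m)%R by nra.
    nra.
  nra.
Qed.

End B.

Lemma b_mono_q q q' m t : (0 <= q)%R -> (q <= q')%R -> (q' <= 1)%R ->
  (b m q t <= b m q' t)%R.
Proof.
move=> h0 h1 h2; elim: m t => [|m IH] [|t] /=; try lra.
have := IH t; have := IH t.+1; have := b_decr (q:=q') ltac:(lra) ltac:(lra) m t.
have := b_range (q:=q) ltac:(lra) ltac:(lra) m t.
have := b_range (q:=q) ltac:(lra) ltac:(lra) m t.+1.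
nra.
Qed.

Lemma card_count (T : finType) (P : pred T) : #|[set x | P x]| = count P (enum T).
Proof. rewrite cardsE cardE /enum_mem size_filter count_filter; apply: eq_count => x. by rewrite /= !inE andbT. Qed.

Lemma indR_inj a c : indR a = indR c -> a = c.
Proof. by case: a; case: c => // /=; lra. Qed.

Section TreeProb.
Variable T : finType.
Variable e : rel T.
Hypothesis esym : symmetric e.
Hypothesis eirr : irreflexive e.
Variable r : nat.
Variable p : R.
Hypothesis hp0 : (0 <= p)%R.
Hypothesis hp1 : (p <= 1)%R.

Let l := enum T.

Lemma Ex_ind_le1 F : (Ex p l (fun f => indR (F f)) <= 1)%R.
Proof.
apply: Rle_trans (Ex_le hp0 hp1 l (G := fun _ => 1%R) _) _.
  by move=> f; case: (F f) => /=; lra.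
rewrite Ex_const; lra.
Qed.

Lemma Ex_ind_ge0 F : (0 <= Ex p l (fun f => indR (F f)))%R.
Proof.
apply: Rle_trans (Ex_le hp0 hp1 l (F := fun _ => 0%R) _); last first.
  by move=> f; case: (F f) => /=; lra.
rewrite Ex_const; lra.
Qed.

Lemma Ex_compl F : Ex p l (fun f => (1 - indR (F f)))%R = (1 - Ex p l (fun f => indR (F f)))%R.
Proof.
rewrite (Ex_ext p l (G := fun f => (1 + (-1) * indR (F f)))%R); last by move=> f; ring.
by rewrite Ex_add Ex_const Ex_scale; ring.
Qed.

Lemma Ex_cst F c : (forall f, F f = c) -> Ex p l F = c.
Proof. move=> H; transitivity (Ex p l (fun _ => c)); [exact: Ex_ext | exact: Ex_const]. Qed.

Lemma count_prob (cs : seq T) (G : T -> (T -> bool) -> bool) (D : T -> pred T) q :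
  (0 <= q)%R -> (q <= 1)%R -> uniq cs ->
  (forall c, c \in cs -> dep (fun f => indR (G c f)) (D c)) ->
  (forall c c' z, c \in cs -> c' \in cs -> c != c' -> D c z -> D c' z -> False) ->
  (forall c, c \in cs -> (q <= Ex p l (fun f => indR (G c f)))%R) ->
  forall t, (b (size cs) q t <= Ex p l (fun f => indR (leq t (count (fun c => G c f) cs))))%R.
Proof.
move=> hq0 hq1; elim: cs => [|c cs IH] Hu Hdep Hdisj Hpr t.
  case: t => [|t] /=.
    by rewrite (Ex_cst (c := 1%R)) //; lra.
  by rewrite (Ex_cst (c := 0%R)) //; lra.
case: t => [|t]; first by rewrite b0 (Ex_cst (c := 1%R)) //; lra.
move: Hu => /= /andP[Hc Hu].
have Hdep' : forall c0, c0 \in cs -> dep (fun f => indR (G c0 f)) (D c0).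
  by move=> c0 h; apply: Hdep; rewrite in_cons h orbT.
have Hdisj' : forall c1 c2 z, c1 \in cs -> c2 \in cs -> c1 != c2 -> D c1 z -> D c2 z -> False.
  by move=> c1 c2 z h1 h2; apply: Hdisj; rewrite in_cons ?h1 ?h2 orbT.
have Hpr' : forall c0, c0 \in cs -> (q <= Ex p l (fun f => indR (G c0 f)))%R.
  by move=> c0 h; apply: Hpr; rewrite in_cons h orbT.
have IHX := IH Hu Hdep' Hdisj' Hpr' t.
have IHY := IH Hu Hdep' Hdisj' Hpr' t.+1.
set X := fun f => indR (leq t (count (fun c0 => G c0 f) cs)).
set Y := fun f => indR (leq t.+1 (count (fun c0 => G c0 f) cs)).
set g := fun f => indR (G c f).
pose U := [pred z | has (fun c0 => D c0 z) cs].
have depCount : forall t', dep (fun f => indR (leq t' (count (fun c0 => G c0 f) cs))) U.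
  move=> t' f f' Hff; congr (indR (leq t' _)); apply: eq_in_count => c0 Hc0.
  apply: indR_inj; apply: (Hdep' c0 Hc0) => y Hy; apply: Hff.
  by rewrite /U /=; apply/hasP; exists c0.
have Hdc : dep g (D c) by apply: Hdep; rewrite in_cons eqxx.
have Hdc' : dep (fun f => 1 - g f)%R (D c).
  by move=> f f' H; rewrite (Hdc f f' H).
have HUD : forall z, D c z -> U z -> False.
  move=> z Hz /hasP[c0 Hc0 Hz0].
  apply: (Hdisj c c0 z) => //; first by rewrite in_cons eqxx.
  - by rewrite in_cons Hc0 orbT.
  - by apply/negP => /eqP E; rewrite E Hc0 in Hc.
rewrite (Ex_ext p l (G := fun f => g f * X f + (1 - g f) * Y f)%R); last first.
  move=> f; rewrite /g /X /Y /=; case: (G c f) => /=; rewrite ?add0n ?add1n ?ltnS; ring.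
rewrite Ex_add (Ex_indep p l Hdc (depCount t) HUD) (Ex_indep p l Hdc' (depCount t.+1) HUD).
rewrite Ex_compl.
have hXY : (Ex p l Y <= Ex p l X)%R.
  apply: Ex_le => // f; rewrite /X /Y.
  move: (@ltnW t (count (fun c0 => G c0 f) cs)).
  case: (leq t.+1 _); case: (leq t _) => /= H; try lra.
  by have := H isT.
have ha : (q <= Ex p l g)%R by apply: Hpr; rewrite in_cons eqxx.
have ha1 : (Ex p l g <= 1)%R by apply: Ex_ind_le1.
have e1 : Ex p l (fun f => indR (G c f)) = Ex p l g by [].
rewrite e1; move: hXY; rewrite /X /Y => hXY.
have := Ex_ind_ge0 (fun f => leq t.+1 (count (fun c0 => G c0 f) cs)).
have := b_range hq0 hq1 (size cs) t.
have := b_range hq0 hq1 (size cs) t.+1.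
nra.
Qed.


Variable d R0 : nat.
Hypothesis Hreg : regular e d.
Hypothesis Hgirth : forall c, is_cycle e c -> R0 + R0 < size c.

Fixpoint Qs k : R := if k is k'.+1 then b d.-1 (Qs k') r else p.

Lemma Qs_range k : (0 <= Qs k <= 1)%R.
Proof. elim: k => [|k IH] /=; [lra | apply: b_range; lra]. Qed.

Lemma size_ch par x : d.-1 <= size (ch e par x).
Proof.
rewrite /ch -cardE; have := cardsD1 par (nbhd e x); rewrite Hreg.
case: (par \in nbhd e x) => /=; lia.
Qed.

Lemma tree_prob k : k <= R0 -> forall par x,
  (Qs k <= Ex p l (fun f => indR (inf e r f k par x)))%R.
Proof.
elim: k => [|k IH] Hk par x /=.
  by rewrite Ex_coord mem_enum inE; lra.
have Hq := Qs_range k.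
apply: Rle_trans (b_mono_m (proj1 Hq) (proj2 Hq) r (size_ch par x)) _.
apply: Rle_trans (Ex_le hp0 hp1 l (F := fun f => indR (leq r (count (fun y => inf e r f k x y) (ch e par x)))) _); last first.
  by move=> f; case: (f x); case: (leq r _) => /=; lra.
apply: (count_prob (G := fun y f => inf e r f k x y) (D := fun y => inD e k x y)) => //.
- lra.
- lra.
- exact: enum_uniq.
- move=> c Hc f g H; congr indR; exact: inf_dep.
- move=> c c' z; rewrite !mem_ch => /andP[_ H1] /andP[_ H2] Hne Hz Hz'.
  have [cy /andP[Hcy Hsz]] := inD_disj esym eirr H1 H2 Hne Hz Hz'.
  have := Hgirth Hcy; lia.
- move=> c Hc; apply: IH; lia.
Qed.

Definition A0 (f : T -> bool) : {set T} :=
  [set x | f x] :|: [set x | ~~ inf e r f R0 x x].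

Lemma A0_contagious f : contagious e r (A0 f).
Proof.
move=> v; case H: (inf e r f R0 v v).
  exists R0; apply: (subsetP (@bp_iter_mono T e r [set x | f x] (A0 f) R0 (subsetUl _ _))).
  exact: inf_sound H.
by exists 0; rewrite /= /A0 in_setU !in_set H orbT.
Qed.

Fixpoint sumR (s : seq T) (F : T -> R) : R :=
  if s is x :: s' then (F x + sumR s' F)%R else 0%R.

Lemma sumR_count s (P : pred T) : INR (count P s) = sumR s (fun x => indR (P x)).
Proof. elim: s => [|x s IH] //=; rewrite plus_INR IH; case: (P x) => /=; ring. Qed.

Lemma Ex_sumR s (H : T -> (T -> bool) -> R) :
  Ex p l (fun f => sumR s (fun x => H x f)) = sumR s (fun x => Ex p l (H x)).
Proof.
elim: s => [|x s IH] /=; first exact: Ex_const.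
by rewrite Ex_add IH.
Qed.

Lemma sumR_le s F G : (forall x, F x <= G x)%R -> (sumR s F <= sumR s G)%R.
Proof. move=> H; elim: s => [|x s IH] /=; [lra | have := H x; lra]. Qed.

Lemma sumR_cst s c : sumR s (fun _ => c) = (INR (size s) * c)%R.
Proof.
elim: s => [|x s IH]; first by simpl; ring.
rewrite [sumR _ _]/= IH; change (size (x :: s)) with (size s).+1; rewrite S_INR; ring.
Qed.

Lemma sumR_add s F G : sumR s (fun x => F x + G x)%R = (sumR s F + sumR s G)%R.
Proof. elim: s => [|x s IH] /=; [ring | rewrite IH; ring]. Qed.

Lemma exists_small : R0 <= R0 ->
  exists f, (INR #|A0 f| <= INR #|T| * (p + (1 - Qs R0)))%R.
Proof.
move=> _.
have [f Hf] := Ex_exists hp0 hp1 l (fun f => INR #|A0 f|).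
exists f; apply: Rle_trans Hf _.
apply: Rle_trans (Ex_le hp0 hp1 l (G := fun f => sumR l (fun x => indR (f x) + indR (~~ inf e r f R0 x x)))%R _) _.
  move=> g; rewrite sumR_add -!sumR_count -plus_INR; apply: le_INR; apply/leP.
  by rewrite /A0 cardsU -!card_count; lia.
rewrite (Ex_sumR l (fun x f => indR (f x) + indR (~~ inf e r f R0 x x))%R).
apply: Rle_trans (sumR_le l (G := fun _ => p + (1 - Qs R0))%R _) _.
  move=> x; rewrite Ex_add Ex_coord mem_enum inE.
  rewrite (Ex_ext p l (G := fun f => 1 - indR (inf e r f R0 x x))%R); last first.
    by move=> g; case: (inf _ _ _ _ _ _) => /=; ring.
  rewrite Ex_compl; have := tree_prob (leqnn R0) x x; lra.
by rewrite sumR_cst /l -cardT; lra.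
Qed.

End TreeProb.

Lemma ffact_ge m t : expn (m - t) t <= m ^_ t.
Proof.
elim: t m => [|t IH] m; first by [].
rewrite ffactnS expnS; apply: leq_mul; first exact: leq_subr.
by apply: leq_trans (IH m.-1); rewrite -subn1 subnAC subn1 -subnS.
Qed.

Lemma bin_ge_R m t : (INR (expn (m - t) t) <= INR 'C(m, t) * INR (t`!))%R.
Proof.
rewrite -mult_INR; apply: le_INR; apply/leP; rewrite multE bin_ffact; exact: ffact_ge.
Qed.

Lemma bernoulli q n : (0 <= q <= 1)%R -> (1 - INR n * q <= (1 - q) ^ n)%R.
Proof.
move=> hq; elim: n => [|n IH]; first by simpl; lra.
rewrite S_INR; change ((1 - q) ^ n.+1)%R with ((1 - q) * (1 - q) ^ n)%R.
have : (0 <= (1 - q) ^ n)%R by apply: pow_le; lra.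
have : (0 <= INR n)%R by apply: pos_INR.
nra.
Qed.

Lemma pow_INR' m n : INR (expn m n) = (INR m ^ n)%R.
Proof. elim: n => [|n IH]; first by []. rewrite expnS mult_INR IH /=; ring. Qed.

Lemma onepq_pow q n j : (0 <= q)%R -> (INR 'C(n, j) * q ^ j <= (1 + q) ^ n)%R.
Proof.
move=> hq; elim: n j => [|n IH] [|j].
- simpl; lra.
- rewrite bin0n /=; have := pow_le q j hq; nra.
- rewrite bin0 /=; have := pow_le (1 + q) n ltac:(lra). have : (1 <= (1 + q) ^ n)%R.
    by apply: pow_R1_Rle; lra.
  nra.
- rewrite binS plus_INR; change ((1 + q) ^ n.+1)%R with ((1 + q) * (1 + q) ^ n)%R.
  change (q ^ j.+1)%R with (q * q ^ j)%R.
  have h1 := IH j; have h2 := IH j.+1.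
  change (q ^ j.+1)%R with (q * q ^ j)%R in h2.
  nra.
Qed.

Definition cst r : R := (/ (2 * INR r`!) * (/ 2) ^ r)%R.

Lemma half_le d r : (r.*2.+2 <= d)%N -> (INR d / 2 <= INR (d.-1 - r))%R.
Proof.
move=> H.
have H2 : (d <= (d.-1 - r).*2)%N by lia.
have := le_INR _ _ (elimT leP H2); rewrite -addnn plus_INR; lra.
Qed.

Lemma phase1 r d q : (r.*2.+2 <= d)%N -> (0 <= q)%R -> (q * (2 * INR d) <= 1)%R ->
  (cst r * INR d ^ r * q ^ r <= b d.-1 q r)%R.
Proof.
move=> Hd hq0 hq.
have hD : (1 <= INR d)%R by change 1%R with (INR 1); apply: le_INR; apply/leP; lia.
have hq1 : (q <= 1)%R by nra.
have hb := b_lower hq0 hq1 d.-1 r.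
set Cb := INR 'C(d.-1, r) in hb *.
set F := INR r`!.
have hF : (0 < F)%R by apply: lt_0_INR; apply/ltP; exact: fact_gt0.
have hC : ((INR d / 2) ^ r <= Cb * F)%R.
  apply: Rle_trans (bin_ge_R _ _); rewrite pow_INR'; apply: pow_incr; split.
    apply: Rmult_le_pos; lra.
  exact: half_le.
have hZ : (/ 2 <= (1 - q) ^ d.-1)%R.
  apply: Rle_trans (bernoulli _ _) ; last lra.
  have : (INR d.-1 <= INR d)%R by apply: le_INR; apply/leP; lia.
  nra.
have hY : (0 <= q ^ r)%R by apply: pow_le.
have hCb : (0 <= Cb)%R by apply: pos_INR.
have E : (cst r * INR d ^ r * q ^ r = / (2 * F) * (INR d / 2) ^ r * q ^ r)%R.
  rewrite /cst /F /Rdiv Rpow_mult_distr; field; exact: (Rgt_not_eq _ _ hF).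
rewrite E.
have h1 : (/ (2 * F) * (INR d / 2) ^ r * q ^ r <= / (2 * F) * (Cb * F) * q ^ r)%R.
  apply: Rmult_le_compat_r => //; apply: Rmult_le_compat_l => //.
  apply: Rlt_le; apply: Rinv_0_lt_compat; lra.
have h2 : (/ (2 * F) * (Cb * F) * q ^ r = Cb * q ^ r * / 2)%R by field; lra.
have h3 : (Cb * q ^ r * / 2 <= Cb * q ^ r * (1 - q) ^ d.-1)%R.
  apply: Rmult_le_compat_l => //; exact: Rmult_le_pos.
lra.
Qed.

Definition Mc r q : R := (INR (r.+2)`! / ((1 - q) ^ r * q ^ (r.+2) * (/ 2) ^ (r.+2)))%R.

Lemma phase2 r d q : (r.*2 + 6 <= d)%N -> (0 < q)%R -> (q < 1)%R ->
  ((1 - b d.-1 q r) * INR d ^ 2 <= Mc r q)%R.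
Proof.
move=> Hd hq0 hq1.
have hD : (1 <= INR d)%R by change 1%R with (INR 1); apply: le_INR; apply/leP; lia.
set n := d.-1; set j := r.+2.
have hU := b_upper (Rlt_le _ _ hq0) (Rlt_le _ _ hq1) n r.
have hn : n.+1 = d by rewrite /n prednK //; lia.
rewrite hn in hU.
set A := ((1 - q) ^ n)%R in hU *.
set P := ((1 + q) ^ n)%R.
have hA0 : (0 <= A)%R by apply: pow_le; lra.
have hAP : (A * P <= 1)%R.
  rewrite /A /P -Rpow_mult_distr; apply: pow_le1; nra.
have hP := onepq_pow n j (Rlt_le _ _ hq0).
set Cj := INR 'C(n, j) in hP.
set Fj := INR j`!.
have hC : ((INR d / 2) ^ j <= Cj * Fj)%R.
  apply: Rle_trans (bin_ge_R _ _); rewrite pow_INR'; apply: pow_incr; split.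
    apply: Rmult_le_pos; lra.
  by apply: half_le; rewrite /j; lia.
have hqj : (0 <= q ^ j)%R by apply: pow_le; lra.
have hFj : (0 < Fj)%R by apply: lt_0_INR; apply/ltP; exact: fact_gt0.
have hCj : (0 <= Cj)%R by apply: pos_INR.
have hDr : (0 < INR d ^ r)%R by apply: pow_lt; lra.
have hqr : (0 < (1 - q) ^ r)%R by apply: pow_lt; lra.
have hb := b_range (Rlt_le _ _ hq0) (Rlt_le _ _ hq1) n r.
have hX : (0 <= (INR d / 2) ^ j)%R by apply: pow_le; lra.
have s1 : ((1 - b n q r) * (1 - q) ^ r * (q ^ j * (INR d / 2) ^ j)
          <= INR d ^ r * A * (q ^ j * (INR d / 2) ^ j))%R.
  apply: Rmult_le_compat_r; first exact: Rmult_le_pos.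
  exact: hU.
have s2 : (A * (q ^ j * (INR d / 2) ^ j) <= A * (q ^ j * (Cj * Fj)))%R.
  apply: Rmult_le_compat_l => //; exact: Rmult_le_compat_l.
have s3 : (A * (q ^ j * (Cj * Fj)) <= Fj)%R.
  have : (A * (Cj * q ^ j) <= A * P)%R by apply: Rmult_le_compat_l.
  have : (A * P * Fj <= Fj)%R by nra.
  nra.
have s4 : ((1 - b n q r) * (1 - q) ^ r * (q ^ j * (INR d / 2) ^ j) <= INR d ^ r * Fj)%R.
  apply: Rle_trans s1 _.
  have : (INR d ^ r * (A * (q ^ j * (INR d / 2) ^ j)) <= INR d ^ r * Fj)%R.
    apply: Rmult_le_compat_l; [lra | exact: Rle_trans s2 s3].
  by rewrite -Rmult_assoc.
have E : ((INR d / 2) ^ j = INR d ^ r * (INR d ^ 2 * (/ 2) ^ j))%R.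
  by rewrite /Rdiv Rpow_mult_distr /j -(addn2 r) pow_add; ring.
rewrite E in s4.
have s5 : ((1 - b n q r) * (1 - q) ^ r * (q ^ j * (INR d ^ 2 * (/ 2) ^ j)) <= Fj)%R.
  apply: (Rmult_le_reg_l (INR d ^ r)) => //.
  apply: (Rle_trans _ ((1 - b n q r) * (1 - q) ^ r * (q ^ j * (INR d ^ r * (INR d ^ 2 * (/ 2) ^ j))))%R).
    right; ring.
  apply: Rle_trans s4 _; right; ring.
have hW : (0 < (1 - q) ^ r * q ^ j * (/ 2) ^ j)%R.
  apply: Rmult_lt_0_compat; first apply: Rmult_lt_0_compat => //.
    by apply: pow_lt.
  by apply: pow_lt; lra.
rewrite /Mc -/j -/Fj.
apply: (Rmult_le_reg_r ((1 - q) ^ r * q ^ j * (/ 2) ^ j)) => //.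
rewrite /Rdiv (Rmult_assoc Fj) Rinv_l; last lra.
apply: (Rle_trans _ ((1 - b n q r) * (1 - q) ^ r * (q ^ j * (INR d ^ 2 * (/ 2) ^ j)))%R).
  right; ring.
apply: Rle_trans s5 _; right; ring.
Qed.

Lemma Rpower_pos x y : (0 < Rpower x y)%R.
Proof. exact: exp_pos. Qed.

Lemma Rpower_0 y : Rpower 0 y = 1%R.
Proof.
have E : ln 0 = 0%R.
  unfold ln; destruct (Rlt_dec 0 0) as [h|h]; [exfalso; exact: (Rlt_irrefl 0 h) | reflexivity].
by rewrite /Rpower E Rmult_0_r exp_0.
Qed.

Lemma Rpower_one y : Rpower 1 y = 1%R.
Proof. by rewrite /Rpower ln_1 Rmult_0_r exp_0. Qed.

Lemma Rpower_m2 D : (1 <= D)%R -> Rpower D (-2) = (/ D ^ 2)%R.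
Proof.
move=> h; rewrite Rpower_Ropp; congr Rinv.
by rewrite -Rpower_pow; [congr Rpower; simpl; ring | lra].
Qed.

Lemma Rpower_m1 D : (1 <= D)%R -> Rpower D (-1) = (/ D)%R.
Proof. move=> h; rewrite Rpower_Ropp Rpower_1 //; lra. Qed.

Section Exps.
Variable r : nat.
Hypothesis Hr : (2 <= r)%N.
Let al := (/ INR (r - 1))%R.
Let s := (INR r / INR (r - 1))%R.

Lemma al_pos : (0 < al)%R.
Proof. apply: Rinv_0_lt_compat; apply: lt_0_INR; apply/ltP; lia. Qed.

Lemma s_eq : s = (INR r * al)%R.
Proof. by []. Qed.

Lemma s_bounds : (1 <= s <= 2)%R.
Proof.
have h1 : (1 <= INR (r - 1))%R by change 1%R with (INR 1); apply: le_INR; apply/leP; lia.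
have h2 : INR r = (INR (r - 1) + 1)%R.
  by rewrite -S_INR; congr INR; lia.
rewrite /s h2; split.
- apply: (Rmult_le_reg_r (INR (r - 1))); first lra.
  rewrite /Rdiv Rmult_assoc Rinv_l; lra.
- apply: (Rmult_le_reg_r (INR (r - 1))); first lra.
  rewrite /Rdiv Rmult_assoc Rinv_l; lra.
Qed.

Lemma Rpow_s_lo D : (1 <= D)%R -> (/ D ^ 2 <= Rpower D (- s))%R.
Proof.
move=> h; rewrite -Rpower_m2 //; apply: Rle_Rpower => //; have := s_bounds; lra.
Qed.

Lemma Rpow_s_hi D : (1 <= D)%R -> (Rpower D (- s) <= / D)%R.
Proof.
move=> h; rewrite -Rpower_m1 //; apply: Rle_Rpower => //; have := s_bounds; lra.
Qed.

Lemma Kc_ge1 c : (0 < c)%R -> (c <= 1)%R -> (1 <= Rpower c (- al))%R.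
Proof.
move=> h0 h1; rewrite Rpower_Ropp.
have h : (Rpower c al <= 1)%R.
  rewrite -(Rpower_one al); apply: Rle_Rpower_l; [exact: Rlt_le al_pos | lra].
have := Rpower_pos c al.
move=> hp; rewrite -Rinv_1; apply: Rinv_le_contravar => //.
Qed.

Lemma x0_fix c D : (0 < c)%R -> (0 < D)%R ->
  let x0 := (Rpower c (- al) * Rpower D (- s))%R in
  (c * D ^ r * x0 ^ r = x0)%R.
Proof.
move=> hc hD x0.
have hDr : (0 < D ^ r)%R by apply: pow_lt.
have E : x0 = Rpower (c * D ^ r) (- al).
  rewrite /x0 -Rpower_mult_distr //; congr (_ * _)%R.
  rewrite -Rpower_pow // Rpower_mult s_eq; congr Rpower; ring.
have hx0 : (0 < x0)%R by rewrite E; exact: Rpower_pos.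
have E2 : (x0 ^ (r - 1) = / (c * D ^ r))%R.
  rewrite -Rpower_pow // E Rpower_mult.
  have -> : (- al * INR (r - 1) = - 1)%R.
    rewrite /al; field; apply: not_0_INR; lia.
  rewrite Rpower_Ropp Rpower_1 //; nra.
have Ex : (x0 ^ r = x0 * x0 ^ (r - 1))%R.
  by rewrite tech_pow_Rmult; congr pow; lia.
rewrite Ex E2; field; nra.
Qed.

End Exps.

Lemma cst_pos r : (0 < cst r)%R.
Proof.
rewrite /cst; apply: Rmult_lt_0_compat.
  apply: Rinv_0_lt_compat; apply: Rmult_lt_0_compat; first lra.
  by apply: lt_0_INR; apply/ltP; exact: fact_gt0.
apply: pow_lt; lra.
Qed.

Lemma cst_le r : (cst r <= / 2)%R.
Proof.
rewrite /cst.
have hF : (1 <= INR r`!)%R by change 1%R with (INR 1); apply: le_INR; apply/leP; exact: fact_gt0.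
have h1 : ((/ 2) ^ r <= 1)%R by apply: pow_le1; lra.
have h0 : (0 <= (/ 2) ^ r)%R by apply: pow_le; lra.
have h2 : (/ (2 * INR r`!) <= / 2)%R by apply: Rinv_le_contravar; lra.
have h3 : (0 <= / (2 * INR r`!))%R by apply: Rlt_le; apply: Rinv_0_lt_compat; lra.
nra.
Qed.

Section Chain.
Variables (r d : nat) (x0 : R).
Hypothesis Hr : (2 <= r)%N.
Hypothesis Hd : (r.*2 + 6 <= d)%N.
Hypothesis hx0 : (0 < x0)%R.
Hypothesis hfix : (cst r * INR d ^ r * x0 ^ r = x0)%R.
Hypothesis hp1 : (256 * x0 <= 1)%R.
Hypothesis Hc2 : (/ (2 * INR d) <= cst r * (/ 2) ^ r)%R.

Let D := INR d.
Let h := (/ (2 * D))%R.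
Let g k := (x0 * 2 ^ (expn 2 (k + 3)))%R.
Let p := (256 * x0)%R.
Let Q k := Qs r p d k.

Lemma hD : (1 <= D)%R.
Proof. rewrite /D; change 1%R with (INR 1); apply: le_INR; apply/leP; lia. Qed.

Lemma h_pos : (0 < h)%R.
Proof. have := hD; rewrite /h => H; apply: Rinv_0_lt_compat; lra. Qed.

Lemma hD2 : (h * (2 * D) = 1)%R.
Proof. have := hD; rewrite /h => H; field; lra. Qed.

Lemma Q_rng k : (0 <= Q k <= 1)%R.
Proof. rewrite /Q; elim: k => [|k IH] /=; [rewrite /p; lra | apply: b_range; lra]. Qed.

Lemma step_h k : (h <= Q k)%R -> (cst r * (/ 2) ^ r <= Q k.+1)%R.
Proof.
move=> H; have [h0 h1] := Q_rng k.
have hh := h_pos.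
change (Q k.+1) with (b d.-1 (Q k) r).
apply: Rle_trans (b_mono_q d.-1 r (Rlt_le _ _ hh) H h1).
apply: Rle_trans (phase1 (r:=r) (d:=d) (q:=h) ltac:(lia) (Rlt_le _ _ hh) _); last first.
  by rewrite hD2; lra.
right; rewrite Rmult_assoc -Rpow_mult_distr; congr (_ * _ ^ _)%R.
rewrite /h; have := hD; rewrite /D => H'; field; lra.
Qed.

Lemma chain k : (h <= Q k)%R \/ ((g k <= Q k)%R /\ (g k <= h)%R).
Proof.
elim: k => [|k IH].
  have E : g 0 = Q 0 by rewrite /g /Q /= /p; simpl; ring.
  case: (Rle_dec (g 0) h) => H; [right; rewrite -E; lra | left; rewrite -E; lra].
case: IH => [H|[H1 H2]].
  left; apply: Rle_trans (step_h H); exact: Hc2.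
have [h0 h1] := Q_rng k.
have hg : (0 <= g k)%R by rewrite /g; apply: Rmult_le_pos; [lra | apply: pow_le; lra].
have HQ : (g k.+1 <= Q k.+1)%R.
  change (Q k.+1) with (b d.-1 (Q k) r).
  apply: Rle_trans (b_mono_q d.-1 r hg H1 h1).
  apply: Rle_trans (phase1 (r:=r) (d:=d) (q:=g k) ltac:(lia) hg _); last first.
    change (INR d) with D; rewrite -hD2; apply: Rmult_le_compat_r => //; have := hD; lra.
  rewrite /g Rpow_mult_distr -Rmult_assoc hfix.
  apply: Rmult_le_compat_l; first lra.
  have E : (2 ^ expn 2 (k.+1 + 3) = (2 ^ expn 2 (k + 3)) ^ 2)%R.
    by rewrite -pow_mult; congr pow; rewrite multE addSn expnS mulnC.
  rewrite E -!pow_mult; apply: Rle_pow; first lra.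
  by apply/leP; rewrite !multE leq_mul2l Hr orbT.
case: (Rle_dec (g k.+1) h) => H; [right; lra | left; lra].
Qed.

Lemma reach k : (d <= expn 2 (expn 2 (k + 3)))%N -> (/ (2 * D ^ 2) <= x0)%R -> (h <= Q k)%R.
Proof.
move=> Hk Hx.
case: (chain k) => [//|[H1 H2]]; apply: Rle_trans H1.
have HDk : (D <= 2 ^ expn 2 (k + 3))%R.
  rewrite /D; change 2%R with (INR 2); rewrite -pow_INR'; apply: le_INR; exact/leP.
have := hD => hD1.
have E : h = (/ (2 * D ^ 2) * D)%R by rewrite /h; field; lra.
rewrite E /g; apply: Rmult_le_compat => //.
- apply: Rlt_le; apply: Rinv_0_lt_compat; nra.
- lra.
Qed.

Lemma final k : (h <= Q k)%R -> ((1 - Q k.+2) * D ^ 2 <= Mc r (cst r * (/ 2) ^ r))%R.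
Proof.
move=> H.
have hc := cst_pos r; have hc' := cst_le r.
have hp0 : (0 < (/ 2) ^ r)%R by apply: pow_lt; lra.
have hp1' : ((/ 2) ^ r <= 1)%R by apply: pow_le1; lra.
have H1 := step_h H.
have [h0 h1] := Q_rng k.+1.
have hc2 : (0 < cst r * (/ 2) ^ r)%R by apply: Rmult_lt_0_compat.
have hc21 : (cst r * (/ 2) ^ r < 1)%R by nra.
have Hb : (b d.-1 (cst r * (/ 2) ^ r) r <= Q k.+2)%R.
  change (Q k.+2) with (b d.-1 (Q k.+1) r).
  exact: (b_mono_q d.-1 r (Rlt_le _ _ hc2) H1 h1).
have P2 := phase2 (r:=r) (d:=d) Hd hc2 hc21.
have hD2' : (0 <= D ^ 2)%R by apply: pow_le; have := hD; lra.
apply: Rle_trans P2; apply: Rmult_le_compat_r => //; lra.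
Qed.

End Chain.

Lemma ln2_pos : (0 < ln 2)%R.
Proof. rewrite -ln_1; apply: ln_increasing; lra. Qed.

Lemma girth_R0 d R0 : (expn 2 (expn 2 R0) < d)%N -> forall n,
  (2 * log2 (log2 (INR d)) + 3 <= INR n)%R -> (R0 + R0 < n)%N.
Proof.
move=> Hd n Hn.
have hl2 := ln2_pos.
have E1 : (0 < 2 ^ expn 2 R0)%R by apply: pow_lt; lra.
have HD : (2 ^ expn 2 R0 < INR d)%R.
  change 2%R with (INR 2); rewrite -pow_INR'; apply: lt_INR; exact/ltP.
have H1 : (INR (expn 2 R0) < log2 (INR d))%R.
  have := ln_increasing _ _ E1 HD; rewrite ln_pow; last lra.
  move=> H; rewrite /log2; apply: (Rmult_lt_reg_r (ln 2)) => //.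
  rewrite /Rdiv Rmult_assoc Rinv_l; lra.
have E2 : (0 < 2 ^ R0)%R by apply: pow_lt; lra.
have H2 : (INR R0 < log2 (log2 (INR d)))%R.
  rewrite pow_INR' in H1; change (INR 2) with 2%R in H1.
  have := ln_increasing _ _ E2 H1; rewrite ln_pow; last lra.
  move=> H; rewrite /log2; apply: (Rmult_lt_reg_r (ln 2)) => //.
  rewrite /Rdiv Rmult_assoc Rinv_l; last lra. move: H; rewrite /log2 /Rdiv; lra.
apply/ltP; apply: INR_lt; rewrite plus_INR; lra.
Qed.

Unset Implicit Arguments.

Lemma Mc_pos r q : (0 < q)%R -> (q < 1)%R -> (0 < Mc r q)%R.
Proof.
move=> h0 h1; rewrite /Mc /Rdiv; apply: Rmult_lt_0_compat.
  by apply: lt_0_INR; apply/ltP; exact: fact_gt0.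
apply: Rinv_0_lt_compat; apply: Rmult_lt_0_compat; first apply: Rmult_lt_0_compat.
all: apply: pow_lt; lra.
Qed.

Theorem theorem9 :
  forall r : nat, 2 <= r ->
  exists C : R,
    forall (T : finType) (e : rel T) (d : nat),
      simple_graph e ->
      regular e d ->
      girth_at_least e (2 * log2 (log2 (INR d)) + 3)%R ->
      forall m : nat, is_min_contagious_size e r m ->
        (INR m <= C * INR #|T| * Rpower (INR d) (- (INR r / INR (r - 1))))%R.
Proof.
move=> r Hr.
set s := (INR r / INR (r - 1))%R.
set al := (/ INR (r - 1))%R.
set c := cst r.
set c2 := (c * (/ 2) ^ r)%R.
set Kc := Rpower c (- al).
set K := (256 * Kc)%R.
set M := Mc r c2.
set B := (INR (r.*2 + 6) + 17 + / (2 * c2) + K)%R.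
have hc : (0 < c)%R := cst_pos r. have hc' : (c <= / 2)%R := cst_le r.
have hp0 : (0 < (/ 2) ^ r)%R by apply: pow_lt; lra.
have hp1' : ((/ 2) ^ r <= 1)%R by apply: pow_le1; lra.
have hc2 : (0 < c2)%R by apply: Rmult_lt_0_compat.
have hc21 : (c2 < 1)%R by rewrite /c2; nra.
have hKc : (1 <= Kc)%R by apply: Kc_ge1 => //; lra.
have hK : (0 <= K)%R by rewrite /K; lra.
have hM : (0 < M)%R by apply: Mc_pos.
have hi2c2 : (0 < / (2 * c2))%R by apply: Rinv_0_lt_compat; lra.
have hB0 : (0 <= INR (r.*2 + 6))%R by apply: pos_INR.
have hB : (17 <= B)%R by rewrite /B; lra.
exists (B ^ 2 + K + M)%R.
move=> T e d [esym eirr] Hreg Hg m [_ Hmin].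
have hn : (0 <= INR #|T|)%R by apply: pos_INR.
have HmT : (m <= #|T|)%N.
  rewrite -cardsT; apply: Hmin => v; exists 0; by rewrite /= in_setT.
have HmTR : (INR m <= INR #|T|)%R by apply: le_INR; apply/leP.
have hRp := Rpower_pos (INR d) (- s).
case: (Rlt_le_dec (INR d) B) => HdB.
-
  have Hp : (/ B ^ 2 <= Rpower (INR d) (- s))%R.
    case Hd0: d => [|d'].
      change (INR 0) with 0%R; rewrite Rpower_0 -Rinv_1; apply: Rinv_le_contravar; first lra.
      have : (1 <= B ^ 2)%R by rewrite -(pow1 2); apply: pow_incr; lra.
      lra.
    have hD1 : (1 <= INR d)%R by rewrite Hd0; change 1%R with (INR 1); apply: le_INR; apply/leP.
    rewrite -Hd0; apply: Rle_trans (Rpow_s_lo Hr hD1).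
    apply: Rinv_le_contravar; first nra.
    apply: pow_incr; lra.
  have hB2 : (0 < B ^ 2)%R by apply: pow_lt; lra.
  have H1 : (1 <= (B ^ 2 + K + M) * Rpower (INR d) (- s))%R.
    have : (B ^ 2 * / B ^ 2 = 1)%R by field; lra.
    have : (B ^ 2 * / B ^ 2 <= B ^ 2 * Rpower (INR d) (- s))%R.
      by apply: Rmult_le_compat_l; lra.
    nra.
  nra.
-
  have hD1 : (1 <= INR d)%R by lra.
  have hD0 : (0 < INR d)%R by lra.
  have Hd6 : (r.*2 + 6 <= d)%N.
    by apply/leP; apply: INR_le; rewrite /B in HdB; lra.
  have Hd17 : (16 < d)%N.
    have : (16 < INR d)%R by rewrite /B in HdB; lra.
    have e16 : INR 16 = 16%R by rewrite INR_IZR_INZ.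
    by rewrite -e16; move/INR_lt/ltP.
  pose x0 := (Kc * Rpower (INR d) (- s))%R.
  have hx0 : (0 < x0)%R by rewrite /x0; apply: Rmult_lt_0_compat; [lra | exact: Rpower_pos].
  have hfix : (cst r * INR d ^ r * x0 ^ r = x0)%R by exact: (x0_fix Hr hc hD0).
  have hsh := Rpow_s_hi Hr hD1.
  have hsl := Rpow_s_lo Hr hD1.
  rewrite -/s in hsh hsl.
  have hp1 : (256 * x0 <= 1)%R.
    have : (256 * x0 <= K * / INR d)%R.
      by rewrite /x0 /K -Rmult_assoc; apply: Rmult_le_compat_l; lra.
    have : (K * / INR d <= 1)%R.
      apply: (Rmult_le_reg_r (INR d)) => //.
      rewrite Rmult_assoc Rinv_l; last lra.
      by rewrite /B in HdB; lra.
    lra.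
  have Hc2 : (/ (2 * INR d) <= cst r * (/ 2) ^ r)%R.
    rewrite -/c -/c2.
    have H2 : (/ (2 * c2) <= INR d)%R by rewrite /B in HdB; lra.
    have : (1 <= 2 * c2 * INR d)%R.
      have := Rmult_le_compat_l (2 * c2) _ _ ltac:(lra) H2.
      by rewrite Rinv_r; lra.
    move=> H3; rewrite -(Rmult_1_l c2).
    apply: (Rmult_le_reg_r (2 * INR d)); first lra.
    rewrite Rinv_l; lra.
  have Hx : (/ (2 * INR d ^ 2) <= x0)%R.
    rewrite /x0; apply: Rle_trans (Rmult_le_compat_r _ _ _ (Rlt_le _ _ hRp) hKc).
    rewrite Rmult_1_l; apply: Rle_trans hsl.
    have : (0 < INR d ^ 2)%R by apply: pow_lt.
    move=> H; apply: Rinv_le_contravar; lra.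
  have Hex : exists R, (d <= expn 2 (expn 2 R.+1))%N.
    exists d; apply: leq_trans (ltnW (ltn_expl d (isT : 1 < 2))) _.
    rewrite leq_exp2l //; exact: leq_trans (leqnSn d) (ltnW (ltn_expl d.+1 (isT : 1 < 2))).
  case: (ex_minnP Hex) => R0 HR0 HminR.
  have HR02 : (2 <= R0)%N.
    case: R0 HR0 HminR => [|[|R0]] HR0 HminR //.
    - by move: HR0; rewrite /= => H; lia.
    - by move: HR0; rewrite /= => H; lia.
  have Hlt : (expn 2 (expn 2 R0) < d)%N.
    rewrite ltnNge; apply/negP => H.
    have := HminR R0.-1; rewrite prednK; last lia.
    by move=> /(_ H); lia.
  have Hgirth : forall cy, is_cycle e cy -> (R0 + R0 < size cy)%N.
    move=> cy Hcy; exact: (girth_R0 Hlt (Hg cy Hcy)).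
  have [f Hf] := exists_small esym eirr r (Rlt_le _ _ (Rmult_lt_0_compat 256 x0 ltac:(lra) hx0)) hp1 Hreg Hgirth (leqnn R0).
  have HmA := Hmin _ (A0_contagious e r R0 f).
  have HmAR : (INR m <= INR #|A0 e r R0 f|)%R by apply: le_INR; apply/leP.
  have [k Ek] : exists k, R0 = k.+2 by exists (R0 - 2); lia.
  rewrite Ek in HR0 Hf HmAR.
  have Hreach := reach Hr Hd6 hx0 hfix hp1 Hc2 (k := k) ltac:(by rewrite addn3) Hx.
  have Hfin := final Hr Hd6 hx0 hfix hp1 Hreach.
  set Q := Qs r (256 * x0) d k.+2 in Hf Hfin.
  have HQ : (1 - Q <= M * Rpower (INR d) (- s))%R.
    have hD2 : (0 < INR d ^ 2)%R by apply: pow_lt.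
    have : (1 - Q <= M * / INR d ^ 2)%R.
      apply: (Rmult_le_reg_r (INR d ^ 2)) => //.
      rewrite Rmult_assoc Rinv_l; [move: Hfin; rewrite -/c -/c2 -/M; lra | lra].
    move=> H; apply: Rle_trans H _; apply: Rmult_le_compat_l; lra.
  have Hpx : (256 * x0 = K * Rpower (INR d) (- s))%R by rewrite /x0 /K; ring.
  rewrite Hpx in Hf.
  have hB2 : (0 <= B ^ 2)%R by apply: pow_le; lra.
  apply: Rle_trans HmAR _; apply: Rle_trans Hf _.
  have : (K * Rpower (INR d) (- s) + (1 - Q) <= (B ^ 2 + K + M) * Rpower (INR d) (- s))%R.
    have : (0 <= B ^ 2 * Rpower (INR d) (- s))%R by apply: Rmult_le_pos; lra.
    lra.
  move=> H.
  apply: (Rle_trans _ (INR #|T| * ((B ^ 2 + K + M) * Rpower (INR d) (- s)))%R).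
    exact: Rmult_le_compat_l.
  right; ring.
Qed.
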